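(* Let $G=(V,E,p)$ be an influence graph with $V=\{1,\dots,n\}$ and let $(x_1,\dots,x_n)\in[0,1]^n$. For the Poisson process with rates $x_1,\dots,x_n$ described in the context, for every $t\in[0,1]$ and every fixed partial realization $\psi$ (that $\Psi(t)$ can take), $$\mathbb{E}\left[\frac{d f(\Psi(t))}{dt}\,\Big|\,\Psi(t)=\psi\right]\ge f^{+}(x_1,\dots,x_n)-\sigma(\Gamma(\psi)),$$ where the left side means $\lim_{dt\to 0^+}\frac{1}{dt}\mathbb{E}[f(\Psi(t+dt))-f(\Psi(t))\mid \Psi(t)=\psi]$.
   Context: IC model: each edge $(u,v)$ of $G$ has probability $p_{uv}\in[0,1]$; a realization (live-edge graph) $\phi$ contains each edge independently with probability $p_{uv}$, with distribution $\mathcal{P}$. $\Gamma(S,\phi)$ is the set of nodes reachable from $S$ in $\phi$ and $\sigma(S)=\mathbb{E}_{\Phi\sim\mathcal{P}}|\Gamma(S,\Phi)|$. Full-adoption feedback: selecting $u$ as a seed reveals the status of all out-going edges of every node reachable from $u$ in $\phi$. A partial realization $\psi$ records the seeds selected so far (the set ${\rm dom}(\psi)$) together with their feedback; $\Gamma(\psi)$ is the set of nodes reachable from ${\rm dom}(\psi)$ (determined by $\psi$) and $f(\psi)=|\Gamma(\psi)|$. An adaptive policy $\pi$ maps partial realizations to the next node to select; $V(\pi,\phi)$ is its seed set under $\phi$ and $\sigma(\pi)=\mathbb{E}_{\Phi\sim\mathcal{P}}|\Gamma(V(\pi,\Phi),\Phi)|$. Define $f^{+}(x_1,\dots,x_n)=\sup_\pi\{\sigma(\pi):\Pr_{\Phi\sim\mathcal{P}}[i\in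 V(\pi,\Phi)]=x_i\ \forall i\in[n]\}$. Poisson process: a realization $\phi\sim\mathcal{P}$ is drawn; there are $n$ independent Poisson clocks $C_1,\dots,C_n$, clock $C_i$ signalling at rate $x_i$; whenever $C_i$ signals, node $i$ is selected as a seed and its feedback under $\phi$ is observed. $\Psi(t)$ is the (random) partial realization at time $t$, with $\Psi(0)=\emptyset$. *)

(* Defs.v *)
From HB Require Import structures.
From mathcomp Require Import all_boot all_order all_algebra.
From mathcomp Require Import all_classical all_reals all_analysis.
Set Implicit Arguments. Unset Strict Implicit. Unset Printing Implicit Defensive.
Import Order.TTheory GRing.Theory Num.Theory.
Import numFieldNormedType.Exports.
Local Open Scope ring_scope.

(* Nodes are 'I_n.  The influence graph is given by p : 'I_n -> 'I_n -> R,
   p u v = probability of edge (u,v) (p u v = 0 for non-edges). *)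

Definition realization (n : nat) := {set 'I_n * 'I_n}.

Definition probR {R : realType} {n : nat} (p : 'I_n -> 'I_n -> R)
  (phi : realization n) : R :=
  \prod_(e : 'I_n * 'I_n) (if e \in phi then p e.1 e.2 else 1 - p e.1 e.2).

Definition reach {n : nat} (phi : realization n) (S : {set 'I_n}) : {set 'I_n} :=
  [set v | [exists u in S, connect [rel a b | (a, b) \in phi] u v]].

Definition sigma {R : realType} {n : nat} (p : 'I_n -> 'I_n -> R)
  (S : {set 'I_n}) : R :=
  \sum_(phi : realization n) probR p phi * #|reach phi S|%:R.

(* A partial realization: its domain (the seeds selected so far) together with
   the full-adoption feedback, recorded as the set of live edges among the
   out-going edges of the nodes reached from the seeds (the other out-going
   edges of reached nodes are thereby known to be dead). *)
Definition preal (n : nat) := ({set 'I_n} * {set 'I_n * 'I_n})%type.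

Definition observe {n : nat} (phi : realization n) (S : {set 'I_n}) : preal n :=
  (S, [set e in phi | e.1 \in reach phi S]).

Definition Gammap {n : nat} (psi : preal n) : {set 'I_n} := reach psi.2 psi.1.

Definition fval {R : realType} {n : nat} (psi : preal n) : R := #|Gammap psi|%:R.

(* Deterministic adaptive policy: next node to select, or None = stop. *)
Definition dpolicy (n : nat) := {ffun preal n -> option 'I_n}.

Definition pstep {n : nat} (pi : dpolicy n) (phi : realization n)
  (S : {set 'I_n}) : {set 'I_n} :=
  match pi (observe phi S) with Some i => i |: S | None => S end.

(* V(pi, phi): seed set of pi under phi (selecting an already selected node
   cannot change the state, i.e. amounts to stopping; n steps suffice). *)
Definition run {n : nat} (pi : dpolicy n) (phi : realization n) : {set 'I_n} :=
  iter n (pstep pi phi) (finset.set0 : {set 'I_n}).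

(* Randomized adaptive policy = probability distribution over deterministic ones. *)
Definition is_rpolicy {R : realType} {n : nat} (mu : dpolicy n -> R) : Prop :=
  (forall pi, 0 <= mu pi) /\ \sum_(pi : dpolicy n) mu pi = 1.

Definition selprob {R : realType} {n : nat} (p : 'I_n -> 'I_n -> R)
  (mu : dpolicy n -> R) (i : 'I_n) : R :=
  \sum_(pi : dpolicy n) mu pi *
    \sum_(phi : realization n) probR p phi * (i \in run pi phi)%:R.

Definition spread {R : realType} {n : nat} (p : 'I_n -> 'I_n -> R)
  (mu : dpolicy n -> R) : R :=
  \sum_(pi : dpolicy n) mu pi *
    \sum_(phi : realization n) probR p phi * #|reach phi (run pi phi)|%:R.

Definition fplus {R : realType} {n : nat} (p : 'I_n -> 'I_n -> R)
  (x : 'I_n -> R) : R :=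
  sup [set r : R | exists mu : dpolicy n -> R,
         [/\ is_rpolicy mu, (forall i, selprob p mu i = x i) & r = spread p mu]].

(* Poisson clocks: clock i (rate x i) has signalled in [0,t] with probability
   1 - exp(-x_i t); by independent increments it signals in (t, t+dt] with
   probability 1 - exp(-x_i dt), independently of the past and of the other
   clocks and of Phi.  S1 = set of clocks signalled by time t,
   S2 = set signalled by time t+dt. *)
Definition clock1 {R : realType} {n : nat} (x : 'I_n -> R) (t : R)
  (S1 : {set 'I_n}) : R :=
  \prod_(i : 'I_n) (if i \in S1 then 1 - expR (- (x i * t)) else expR (- (x i * t))).

Definition clock2 {R : realType} {n : nat} (x : 'I_n -> R) (t dt : R)
  (S1 S2 : {set 'I_n}) : R :=
  (S1 \subset S2)%:R *
  \prod_(i : 'I_n)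
    (if i \in S1 then 1 - expR (- (x i * t))
     else if i \in S2 then expR (- (x i * t)) * (1 - expR (- (x i * dt)))
     else expR (- (x i * (t + dt)))).

(* Pr[Psi(t) = psi], with Psi(t) = observe Phi S(t). *)
Definition probPsi {R : realType} {n : nat} (p : 'I_n -> 'I_n -> R)
  (x : 'I_n -> R) (t : R) (psi : preal n) : R :=
  \sum_(phi : realization n) \sum_(S1 : {set 'I_n})
     probR p phi * clock1 x t S1 * (observe phi S1 == psi)%:R.

Definition condDiff {R : realType} {n : nat} (p : 'I_n -> 'I_n -> R)
  (x : 'I_n -> R) (t dt : R) (psi : preal n) : R :=
  (\sum_(phi : realization n) \sum_(S1 : {set 'I_n}) \sum_(S2 : {set 'I_n})
     probR p phi * clock2 x t dt S1 S2 * (observe phi S1 == psi)%:R *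
     (fval (observe phi S2) - fval (observe phi S1)))
  / probPsi p x t psi.

(* Main.v *)
Require Import Defs.
From HB Require Import structures.
From mathcomp Require Import all_boot all_order all_algebra.
From mathcomp Require Import all_classical all_reals all_analysis.
From mathcomp Require Import ring.
Import Order.TTheory GRing.Theory Num.Theory.
Import numFieldNormedType.Exports.
Local Open Scope ring_scope.
Local Open Scope classical_set_scope.
Set Implicit Arguments. Unset Strict Implicit. Unset Printing Implicit Defensive.
Local Notation subsetP := fintype.subsetP.

Lemma path_restr (T : finType) (e e' : rel T) (A : pred T) :
  (forall u v, A u -> e u v -> A v /\ e' u v) ->
  forall u v, A u -> connect e u v -> A v /\ connect e' u v.
Proof.
move=> H u v Au /connectP [s pth ->] {v}.
elim: s u Au pth => [|w s IH] u Au /=; first by split => //; exact: connect0.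
move=> /andP [euw pth].
have [Aw e'uw] := H _ _ Au euw.
have [A' c'] := IH _ Aw pth; split => //.
by apply: connect_trans c'; exact: connect1.
Qed.

Lemma path_split (T : finType) (e : rel T) (Y Z : pred T) :
  (forall u v, Z u -> e u v -> Z v) -> (forall u, Y u -> Z u) ->
  forall u v, ~~ Y u -> connect e u v ->
    Z v \/ connect [rel a b | e a b && ~~ Y a && ~~ Y b] u v.
Proof.
move=> Zc YZ u v Yu /connectP [s pth ->] {v}.
have Zs : forall w s, Z w -> path e w s -> Z (last w s).
  move=> w0 s0; elim: s0 w0 => [|w1 s1 IH] w0 //= Zw /andP [e01 p1].
  by apply: IH => //; exact: Zc e01.
elim: s u Yu pth => [|w s IH] u Yu /=; first by right; exact: connect0.
move=> /andP [euw pth].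
case Yw : (Y w).
  by left; apply: Zs pth; apply: YZ.
have [|c] := IH w (negbT Yw) pth; first by left.
right; apply: connect_trans c; apply: connect1 => /=.
by rewrite euw Yu Yw.
Qed.

Section Graph.
Variable n : nat.
Implicit Types (phi : realization n) (S X Y : {set 'I_n}).

Definition relr phi := [rel a b | (a, b) \in phi].

Lemma in_reach phi S v :
  (v \in reach phi S) = [exists u in S, connect (relr phi) u v].
Proof. by rewrite inE. Qed.

Lemma reach_sub phi S : S \subset reach phi S.
Proof.
apply/subsetP => u uS; rewrite in_reach; apply/existsP; exists u.
by rewrite uS connect0.
Qed.

Lemma reach_monoS phi S S' : S \subset S' -> reach phi S \subset reach phi S'.
Proof.
move=> /subsetP sS; apply/subsetP => v; rewrite !in_reach.
move=> /existsP [u /andP [uS c]]; apply/existsP; exists u.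
by rewrite sS.
Qed.

Lemma reach_closed phi S u v :
  u \in reach phi S -> (u, v) \in phi -> v \in reach phi S.
Proof.
rewrite !in_reach => /existsP [w /andP [wS c]] uv.
apply/existsP; exists w; rewrite wS /=.
by apply: connect_trans c _; apply: connect1.
Qed.

Lemma reach_local phi phi' S :
  (forall e, e.1 \in reach phi S -> (e \in phi) = (e \in phi')) ->
  reach phi' S = reach phi S.
Proof.
move=> H; apply/setP => v; apply/idP/idP.
- rewrite {1}in_reach => /existsP [u /andP [uS c]].
  have := @path_restr _ (relr phi') (relr phi) (mem (reach phi S)) _ u v.
  case => //.
  + move=> a b /= aR ab.
    have ab' : (a, b) \in phi by rewrite (H (a, b)).
    by split => //; exact: reach_closed ab'.
  + by move/subsetP: (reach_sub phi S); apply.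
- move=> vR.
  have := vR; rewrite {1}in_reach => /existsP [u /andP [uS c]].
  have := @path_restr _ (relr phi) (relr phi') (mem (reach phi S)) _ u v.
  case => //.
  + move=> a b /= aR ab.
    split; first exact: reach_closed ab.
    by rewrite -(H (a, b)).
  + by move/subsetP: (reach_sub phi S); apply.
  + move=> _ c'; rewrite in_reach; apply/existsP; exists u; by rewrite uS.
Qed.

Lemma Gammap_obs phi S : Gammap (observe phi S) = reach phi S.
Proof.
rewrite /Gammap /observe /=; apply: reach_local => e eR.
by rewrite inE eR andbT.
Qed.

Definition Bav phi (j : 'I_n) Y :=
  reach [set e in phi | (e.1 \notin Y) && (e.2 \notin Y)] ([set j] :\: Y).

Lemma Bav_local phi phi' j Y :
  (forall e, e.1 \notin Y -> (e \in phi) = (e \in phi')) ->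
  Bav phi j Y = Bav phi' j Y.
Proof.
move=> H; rewrite /Bav; f_equal; apply/setP => e; rewrite !inE.
by case: (boolP (e.1 \in Y)) => eY; [rewrite /= !andbF|rewrite H].
Qed.

Lemma Bav_anti phi j Y Y' : Y \subset Y' -> Bav phi j Y' \subset Bav phi j Y.
Proof.
move=> /subsetP sY; apply/subsetP => v; rewrite /Bav !in_reach.
move=> /existsP [u /andP [uS c]]; apply/existsP; exists u.
apply/andP; split.
  move: uS; rewrite !inE => /andP [uY ->]; rewrite andbT.
  exact: (contra (sY u) uY).
have [] := @path_restr _ (relr [set e in phi | (e.1 \notin Y') && (e.2 \notin Y')])
  (relr [set e in phi | (e.1 \notin Y) && (e.2 \notin Y)]) predT _ u v => //.
move=> a b _ /=; rewrite !inE /= => /andP [-> /andP [aY bY]]; split => //.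
by rewrite (contra (sY a) aY) (contra (sY b) bY).
Qed.

Lemma Bav_disj phi j Y v : v \in Bav phi j Y -> v \notin Y.
Proof.
rewrite /Bav in_reach => /existsP [u /andP [uS c]].
have [] := @path_restr _ (relr [set e in phi | (e.1 \notin Y) && (e.2 \notin Y)])
  (relr [set e in phi | (e.1 \notin Y) && (e.2 \notin Y)]) (fun w => w \notin Y) _ u v => //.
- move=> a b _ H; split; last exact: H.
  by move: H; rewrite /= !inE => /and3P [].
- by move: uS; rewrite !inE => /andP [].
Qed.

Lemma Bav_sub phi j Y X : Bav phi j Y \subset reach phi (j |: X).
Proof.
apply/subsetP => v; rewrite /Bav !in_reach => /existsP [u /andP [uS c]].
apply/existsP; exists u; apply/andP; split.
  by move: uS; rewrite !inE => /andP [_ ->].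
have [] := @path_restr _ (relr [set e in phi | (e.1 \notin Y) && (e.2 \notin Y)])
  (relr phi) predT _ u v => //.
by move=> a b _ /=; rewrite inE => /andP [].
Qed.

Lemma reach_add phi j X Y :
  Y \subset reach phi X ->
  reach phi (j |: X) \subset reach phi X :|: Bav phi j Y.
Proof.
move=> /subsetP YZ; apply/subsetP => v; rewrite in_reach => /existsP [u /andP [uS c]].
rewrite finset.in_setU; move: uS c; rewrite finset.in_setU1 => /orP [/eqP ->{u} c|uX c].
  case: (boolP (j \in Y)) => jY.
    apply/orP; left.
    have jZ := YZ _ jY.
    move: jZ; rewrite in_reach => /existsP [w /andP [wX c']].
    by rewrite in_reach; apply/existsP; exists w; rewrite wX (connect_trans c').
  have := @path_split _ (relr phi) (mem Y) (mem (reach phi X)) _ _ j v jY c.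
  case => //.
  - move=> a b /= aZ ab; exact: reach_closed ab.
  - by move=> H; apply/orP; left.
  - move=> c2; apply/orP; right; rewrite /Bav in_reach; apply/existsP; exists j.
    rewrite !inE eqxx jY /=.
    apply: connect_sub c2 => a b /= /andP [/andP [ab aY] bY].
    by apply: connect1; rewrite /= inE ab /= aY bY.
apply/orP; left; rewrite in_reach; apply/existsP; exists u; by rewrite uX.
Qed.

End Graph.

Section Prob.
Variable R : realType.
Variable n : nat.
Variable p : 'I_n -> 'I_n -> R.
Hypothesis hp : forall u v, 0 <= p u v <= 1.

Lemma probR_ge0 phi : 0 <= probR p phi.
Proof.
apply: prodr_ge0 => e _; have /andP [h0 h1] := hp e.1 e.2.
by case: ifP => _ //; rewrite subr_ge0.
Qed.

Lemma probR_sum1 : \sum_(phi : realization n) probR p phi = 1.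
Proof.
have := @bigA_distr R 0 1 *%R +%R _ (fun e : 'I_n * 'I_n => p e.1 e.2)
  (fun e => 1 - p e.1 e.2).
rewrite big1 => [|e _]; last by rewrite /= addrCA subrr addr0.
by move=> ->; apply: eq_bigl.
Qed.

Definition mix (Q a b : realization n) : realization n := (a :&: Q) :|: (b :\: Q).

Lemma in_mix Q a b e : (e \in mix Q a b) = if e \in Q then e \in a else e \in b.
Proof. by rewrite !finset.inE; case: (e \in Q); rewrite ?andbT ?andbF ?orbF. Qed.

Lemma mixK Q a b : mix Q (mix Q a b) (mix Q b a) = a.
Proof. by apply/setP => e; rewrite !in_mix; case: (e \in Q). Qed.

Lemma mixIQ Q a b : mix Q a b :&: Q = a :&: Q.
Proof. by apply/setP => e; rewrite finset.in_setI in_mix finset.in_setI; case: (e \in Q); rewrite ?andbT ?andbF. Qed.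

Lemma mixDQ Q a b : mix Q a b :\: Q = b :\: Q.
Proof. by apply/setP => e; rewrite finset.in_setD in_mix finset.in_setD; case: (e \in Q). Qed.

Lemma probR_mix Q a b :
  probR p a * probR p b = probR p (mix Q a b) * probR p (mix Q b a).
Proof.
rewrite /probR -!big_split; apply: eq_bigr => e _ /=; rewrite !in_mix.
by case: (e \in Q) => //; rewrite mulrC.
Qed.

Lemma indep Q (F H : realization n -> R) :
  (forall a b, a :&: Q = b :&: Q -> F a = F b) ->
  (forall a b, a :\: Q = b :\: Q -> H a = H b) ->
  \sum_phi probR p phi * (F phi * H phi) =
  (\sum_phi probR p phi * F phi) * (\sum_phi probR p phi * H phi).
Proof.
move=> hF hH.
rewrite big_distrlr /=.
pose h (cd : realization n * realization n) :=
  probR p cd.1 * probR p cd.2 * (F cd.1 * H cd.1).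
pose f (ab : realization n * realization n) := (mix Q ab.1 ab.2, mix Q ab.2 ab.1).
have fK : involutive f by case=> a b; rewrite /f /= !mixK.
transitivity (\sum_a \sum_b h (f (a, b))); last first.
  apply: eq_bigr => a _; apply: eq_bigr => b _; rewrite /h /f /=.
  rewrite -probR_mix (hF (mix Q a b) a) ?mixIQ // (hH (mix Q a b) b) ?mixDQ //.
  by rewrite mulrACA.
rewrite pair_bigA /=.
transitivity (\sum_(ab : realization n * realization n) h ab); last first.
  by rewrite (reindex_inj (inv_inj fK)); apply: eq_bigr => -[a b] _.
transitivity (\sum_(a : realization n) \sum_(b : realization n) h (a, b)); last first.
  by rewrite pair_bigA; apply: eq_bigr => -[a b].
apply: eq_bigr => a _; rewrite /h /= -big_distrl /= -big_distrr /=.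
by rewrite probR_sum1 mulr1.
Qed.

End Prob.

Lemma obs_local n (phi phi' : realization n) S :
  (forall e, e.1 \in reach phi S -> (e \in phi) = (e \in phi')) ->
  observe phi' S = observe phi S.
Proof.
move=> H; rewrite /observe (reach_local H); congr pair; apply/setP => e.
rewrite [LHS]finset.in_set [RHS]finset.in_set.
case: (boolP (e.1 \in reach phi S)) => eR.
  by rewrite (H e eR).
by rewrite !andbF.
Qed.

Lemma sum_ind1 (R : realType) (T : finType) (a : T) (c : T -> R) :
  \sum_(i : T) (i == a)%:R * c i = c a.
Proof.
rewrite (bigD1 a) //= eqxx mul1r big1 ?addr0 // => i /negbTE ->.
by rewrite mul0r.
Qed.

Section Policy.
Variable R : realType.
Variable n : nat.
Variable p : 'I_n -> 'I_n -> R.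
Hypothesis hp : forall u v, 0 <= p u v <= 1.
Variable pi : dpolicy n.
Variable G : {set 'I_n}.

Definition V k (phi : realization n) := iter k (pstep pi phi) finset.set0.

Lemma V_mono k (phi : realization n) : V k phi \subset V k.+1 phi.
Proof.
rewrite /V iterS /pstep; case: (pi _) => [i|]; [exact: finset.subsetUr|exact: fintype.subxx].
Qed.

Lemma traj k (phi phi' : realization n) :
  (forall e, e.1 \in reach phi (V k phi) -> (e \in phi) = (e \in phi')) ->
  V k phi' = V k phi.
Proof.
elim: k => [//|k IH] H.
have H' : forall e, e.1 \in reach phi (V k phi) -> (e \in phi) = (e \in phi').
  move=> e he; apply: H.
  by apply: (fintype.subsetP (reach_monoS phi (V_mono k phi))).
have E := IH H'.
have Eo := obs_local H'.
by rewrite /V !iterS -/(V k phi') -/(V k phi) E /pstep Eo.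
Qed.

Definition gval phi (X : {set 'I_n}) : R := #|reach phi (X :|: G)|%:R.
Definition aj j : R := \sum_(phi : realization n) probR p phi * #|Bav phi j G|%:R.
Definition Pin k j : R := \sum_(phi : realization n) probR p phi * (j \in V k phi)%:R.
Definition Tj k phi j : bool := (pi (observe phi (V k phi)) == Some j) && (j \notin V k phi).

Lemma step_in k phi j :
  (j \in V k.+1 phi)%:R = (j \in V k phi)%:R + (Tj k phi j)%:R :> R.
Proof.
rewrite /V iterS -/(V k phi) /pstep /Tj.
case: (pi (observe phi (V k phi))) => [i|]; last by rewrite /= addr0.
rewrite finset.in_setU1.
case: (boolP (j \in V k phi)) => jV; first by rewrite orbT andbF addr0.
rewrite orbF andbT /= add0r; case: (eqVneq j i) => [->|ji]; first by rewrite eqxx.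
by rewrite (inj_eq (@Some_inj _)) eq_sym (negbTE ji).
Qed.

Lemma step_g k phi :
  gval phi (V k.+1 phi) <= gval phi (V k phi) +
    \sum_j (Tj k phi j)%:R * #|Bav phi j (reach phi (V k phi) :|: G)|%:R.
Proof.
have sum0 : (forall j, Tj k phi j = false) ->
   \sum_j (Tj k phi j)%:R * #|Bav phi j (reach phi (V k phi) :|: G)|%:R = 0 :> R.
  by move=> h; apply: big1 => j _; rewrite h mul0r.
rewrite /gval /V iterS -/(V k phi) /pstep.
have TjE : forall j, Tj k phi j =
   (pi (observe phi (V k phi)) == Some j) && (j \notin V k phi) by [].
case E : (pi (observe phi (V k phi))) => [i|]; last first.
  by rewrite sum0 ?addr0 // => j; rewrite TjE E.
case: (boolP (i \in V k phi)) => iV.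
  have -> : i |: V k phi = V k phi by apply/finset.setUidPr; rewrite finset.sub1set.
  rewrite sum0 ?addr0 //.
  move=> j; rewrite TjE E; case: (eqVneq i j) => [<-|ij]; first by rewrite iV andbF.
  by rewrite (inj_eq (@Some_inj _)) (negbTE ij).
rewrite (bigD1 i) //= big1 ?addr0 => [|j ji]; last first.
  by rewrite TjE E /= (inj_eq (@Some_inj _)) eq_sym (negbTE ji) mul0r.
rewrite TjE E eqxx iV mul1r -natrD ler_nat -finset.setUA.
apply: leq_trans (leq_card_setU _ _).
apply: subset_leq_card; apply: reach_add.
apply/fintype.subsetP => v; rewrite finset.in_setU => /orP [vR|vG].
  by apply: (fintype.subsetP (reach_monoS phi (finset.subsetUl (V k phi) G))).
apply: (fintype.subsetP (reach_sub phi (V k phi :|: G))).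
by rewrite finset.in_setU vG orbT.
Qed.


Lemma step_exp k j :
  \sum_phi probR p phi *
     ((Tj k phi j)%:R * #|Bav phi j (reach phi (V k phi) :|: G)|%:R)
  <= (\sum_phi probR p phi * (Tj k phi j)%:R) * aj j.
Proof.
pose F Rs phi : R := ((reach phi (V k phi) == Rs) && Tj k phi j)%:R.
pose H Rs phi : R := #|Bav phi j (Rs :|: G)|%:R.
have E1 : forall phi, probR p phi *
     ((Tj k phi j)%:R * #|Bav phi j (reach phi (V k phi) :|: G)|%:R)
   = \sum_(Rs : {set 'I_n}) probR p phi * (F Rs phi * H Rs phi).
  move=> phi; rewrite (bigD1 (reach phi (V k phi))) //= big1 ?addr0.
    by rewrite /F /H eqxx.
  move=> Rs hR; rewrite /F eq_sym (negbTE hR) /=.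
  by rewrite mul0r mulr0.
have E2 : forall phi, probR p phi * (Tj k phi j)%:R
   = \sum_(Rs : {set 'I_n}) probR p phi * F Rs phi.
  move=> phi; rewrite (bigD1 (reach phi (V k phi))) //= big1 ?addr0.
    by rewrite /F eqxx.
  move=> Rs hR; rewrite /F eq_sym (negbTE hR) /=.
  by rewrite mulr0.
rewrite (eq_bigr _ (fun phi _ => E1 phi)) (eq_bigr _ (fun phi _ => E2 phi)).
rewrite exchange_big [X in _ <= X * _]exchange_big big_distrl /=.
apply: ler_sum => Rs _.
have core : forall a b : realization n,
    (forall e, e.1 \in Rs -> (e \in a) = (e \in b)) ->
    reach a (V k a) = Rs -> reach b (V k b) = Rs /\ Tj k b j = Tj k a j.
  move=> a b ag ra.
  have ag' : forall e, e.1 \in reach a (V k a) -> (e \in a) = (e \in b).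
    by rewrite ra.
  have Vb := traj ag'.
  have rb := reach_local ag'.
  have ob := obs_local ag'.
  by split; [rewrite Vb rb|rewrite /Tj Vb ob].
rewrite (@indep _ _ p [set e | e.1 \in Rs]).
- apply: ler_wpM2l.
    apply: sumr_ge0 => phi _; apply: mulr_ge0; first exact: probR_ge0.
    by rewrite /F ler0n.
  apply: ler_sum => phi _; apply: ler_wpM2l; first exact: probR_ge0.
  rewrite /H ler_nat; apply: subset_leq_card; apply: Bav_anti.
  exact: finset.subsetUr.
- move=> a b Eab.
  have agree : forall e, e.1 \in Rs -> (e \in a) = (e \in b).
    move=> e he; have := congr1 (fun X : realization n => e \in X) Eab.
    by rewrite /= !finset.in_setI !finset.in_set he !andbT.
  have agree' : forall e, e.1 \in Rs -> (e \in b) = (e \in a).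
    by move=> e he; rewrite agree.
  rewrite /F /=; case: (eqVneq (reach a (V k a)) Rs) => ra.
    by have [rb tb] := core a b agree ra; rewrite rb eqxx tb.
  case: (eqVneq (reach b (V k b)) Rs) => rb.
    have [ra' _] := core b a agree' rb.
    by rewrite ra' eqxx in ra.
  by [].
- move=> a b Eab; rewrite /H (@Bav_local _ a b) // => e he.
  have := congr1 (fun X : realization n => e \in X) Eab.
  rewrite /= !finset.in_setD !finset.in_set.
  have -> : (e.1 \in Rs) = false.
    by apply/negbTE; apply: contra he => h; rewrite finset.in_setU h.
  by rewrite /=.
Qed.

Lemma main_ind k :
  \sum_phi probR p phi * gval phi (V k phi) <=
  sigma p G + \sum_j Pin k j * aj j.
Proof.
elim: k => [|k IH].
  rewrite [X in _ + X]big1 ?addr0 => [|j _]; last first.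
    by rewrite /Pin big1 ?mul0r // => phi _; rewrite /V /= finset.in_set0 mulr0.
  rewrite le_eqVlt; apply/orP; left; apply/eqP; apply: eq_bigr => phi _.
  by rewrite /gval /V /= finset.set0U.
have S1 : \sum_phi probR p phi * gval phi (V k.+1 phi) <=
   \sum_phi probR p phi * (gval phi (V k phi) +
    \sum_j (Tj k phi j)%:R * #|Bav phi j (reach phi (V k phi) :|: G)|%:R).
  apply: ler_sum => phi _; apply: ler_wpM2l; first exact: probR_ge0.
  exact: step_g.
have S2 : \sum_phi probR p phi * (gval phi (V k phi) +
    \sum_j (Tj k phi j)%:R * #|Bav phi j (reach phi (V k phi) :|: G)|%:R)
   = \sum_phi probR p phi * gval phi (V k phi) +
     \sum_j \sum_phi probR p phi *
       ((Tj k phi j)%:R * #|Bav phi j (reach phi (V k phi) :|: G)|%:R).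
  rewrite [X in _ = _ + X]exchange_big -big_split /=; apply: eq_bigr => phi _.
  by rewrite mulrDr mulr_sumr.
have S3 : \sum_j \sum_phi probR p phi *
       ((Tj k phi j)%:R * #|Bav phi j (reach phi (V k phi) :|: G)|%:R)
   <= \sum_j (\sum_phi probR p phi * (Tj k phi j)%:R) * aj j.
  by apply: ler_sum => j _; apply: step_exp.
have S4 : forall j, Pin k.+1 j = Pin k j + \sum_phi probR p phi * (Tj k phi j)%:R.
  move=> j; rewrite /Pin -big_split /=; apply: eq_bigr => phi _.
  by rewrite step_in mulrDr.
apply: le_trans S1 _; rewrite S2.
apply: le_trans (lerD IH S3) _.
rewrite -addrA lerD2l -big_split /=; apply: ler_sum => j _.
by rewrite S4 mulrDl.
Qed.

Lemma policy_bound :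
  \sum_phi probR p phi * #|reach phi (run pi phi)|%:R <=
  sigma p G + \sum_j (\sum_phi probR p phi * (j \in run pi phi)%:R) * aj j.
Proof.
apply: le_trans (main_ind n).
apply: ler_sum => phi _; apply: ler_wpM2l; first exact: probR_ge0.
rewrite /gval ler_nat; apply: subset_leq_card; apply: reach_monoS.
exact: finset.subsetUl.
Qed.

End Policy.

Section Final.
Variable R : realType.
Variable n : nat.
Variable p : 'I_n -> 'I_n -> R.
Hypothesis hp : forall u v, 0 <= p u v <= 1.

Lemma aj_ge0 G j : 0 <= aj p G j.
Proof.
by apply: sumr_ge0 => phi _; apply: mulr_ge0; [exact: probR_ge0|exact: ler0n].
Qed.

Lemma sigma_ge0 G : 0 <= sigma p G.
Proof.
by apply: sumr_ge0 => phi _; apply: mulr_ge0; [exact: probR_ge0|exact: ler0n].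
Qed.

Lemma spread_bound (x : 'I_n -> R) (mu : dpolicy n -> R) G :
  is_rpolicy mu -> (forall i, selprob p mu i = x i) ->
  spread p mu <= sigma p G + \sum_j x j * aj p G j.
Proof.
move=> [mu0 mu1] hx.
apply: le_trans (_ : \sum_pi mu pi * (sigma p G + \sum_j
   (\sum_phi probR p phi * (j \in run pi phi)%:R) * aj p G j) <= _).
  apply: ler_sum => pi _; apply: ler_wpM2l => //.
  exact: policy_bound.
rewrite le_eqVlt; apply/orP; left; apply/eqP.
under eq_bigr do rewrite mulrDr.
rewrite big_split /= -big_distrl /= mu1 mul1r; congr (_ + _).
under eq_bigr do rewrite mulr_sumr.
rewrite exchange_big /=; apply: eq_bigr => j _.
rewrite -hx /selprob big_distrl /=; apply: eq_bigr => pi _.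
by rewrite mulrA.
Qed.

Lemma fplus_bound (x : 'I_n -> R) G :
  (forall i, 0 <= x i) ->
  fplus p x <= sigma p G + \sum_j x j * aj p G j.
Proof.
move=> x0; rewrite /fplus.
set A := [set r : R | _].
have ub : ubound A (sigma p G + \sum_j x j * aj p G j).
  move=> r [mu [hmu hsel ->]]; exact: spread_bound hmu hsel.
case: (pselect (A !=set0)) => [ne|e].
  exact: ge_sup ne ub.
have -> : A = set0.
  apply/seteqP; split => // r Ar; apply: e; by exists r.
rewrite sup0; apply: addr_ge0; first exact: sigma_ge0.
by apply: sumr_ge0 => j _; apply: mulr_ge0; [exact: x0|exact: aj_ge0].
Qed.

Lemma obs_eqS (phi : realization n) S1 (psi : preal n) :
  (observe phi S1 == psi) = (S1 == psi.1) && (observe phi psi.1 == psi).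
Proof.
case: (eqVneq (observe phi S1) psi) => [<-|ne] /=; first by rewrite !eqxx.
case: (eqVneq S1 psi.1) => // E; by rewrite -E (negbTE ne).
Qed.

Lemma card_add (phi : realization n) S j :
  #|reach phi (j |: S)| = (#|reach phi S| + #|Bav phi j (reach phi S)|)%N.
Proof.
have E : reach phi (j |: S) = reach phi S :|: Bav phi j (reach phi S).
  apply/eqP; rewrite finset.eqEsubset; apply/andP; split.
    by apply: reach_add; exact: fintype.subxx.
  rewrite finset.subUset; apply/andP; split; last exact: Bav_sub.
  by apply: reach_monoS; exact: finset.subsetUr.
rewrite E -cardsUI.
have -> : reach phi S :&: Bav phi j (reach phi S) = finset.set0.
  apply/setP => v; rewrite finset.in_setI finset.in_set0.
  by case: (boolP (v \in Bav phi j (reach phi S))) => h; [rewrite (negbTE (Bav_disj h))|rewrite andbF].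
by rewrite cards0 addn0.
Qed.

Lemma numer (psi : preal n) j :
  \sum_phi probR p phi * ((observe phi psi.1 == psi)%:R *
     (fval (observe phi (j |: psi.1)) - fval (observe phi psi.1)))
  = (\sum_phi probR p phi * (observe phi psi.1 == psi)%:R) * aj p (Gammap psi) j.
Proof.
set S := psi.1; set G := Gammap psi.
have E : forall phi, probR p phi * ((observe phi S == psi)%:R *
     (fval (observe phi (j |: S)) - fval (observe phi S)) : R)
   = probR p phi * ((observe phi S == psi)%:R * #|Bav phi j G|%:R).
  move=> phi; case: (eqVneq (observe phi S) psi) => [Eo|ne]; last by rewrite !mul0r.
  have RG : reach phi S = G by rewrite /G -Eo Gammap_obs.
  rewrite /fval !Gammap_obs card_add RG natrD.
  by rewrite addrAC subrr add0r.
rewrite (eq_bigr _ (fun phi _ => E phi)) /aj.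
rewrite (@indep _ _ p [set e | e.1 \in G]) //.
- have core : forall a b : realization n, a :&: [set e | e.1 \in G] = b :&: [set e | e.1 \in G] ->
      observe a S = psi -> observe b S = psi.
    move=> a b Eab Ea.
    have RG : reach a S = G by rewrite /G -Ea Gammap_obs.
    rewrite -Ea; apply: obs_local => e he.
    have hQ : e \in [set e0 : 'I_n * 'I_n | e0.1 \in G]%SET by rewrite finset.inE -RG.
    have := congr1 (fun X : realization n => e \in X) Eab.
    by rewrite /= !finset.in_setI hQ !andbT.
  move=> a b Eab.
  case: (eqVneq (observe a S) psi) => [Ea|na].
    by rewrite (core a b Eab Ea) eqxx.
  case: (eqVneq (observe b S) psi) => [Eb|nb] //.
  by rewrite (core b a (esym Eab) Eb) eqxx in na.
- move=> a b Eab; rewrite (@Bav_local _ a b) // => e he.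
  have := congr1 (fun X : realization n => e \in X) Eab.
  have hQ : (e \in [set e0 : 'I_n * 'I_n | e0.1 \in G]%SET) = false.
    by rewrite finset.inE (negbTE he).
  by rewrite /= !finset.in_setD hQ.
Qed.

End Final.

Section Analysis.
Variable R : realType.

Lemma lim_expdiff (a : R) :
  (fun h : R => h^-1 * (1 - expR (-(a*h)))) @ 0^'+ --> a.
Proof.
set g := (expR \o (fun h : R => -(a*h))).
have D : is_derive (0:R) 1 g (expR (-(a*0)) * (-a)).
  apply: is_derive1_comp.
  have -> : (fun h : R => -(a*h)) = - (a *: id).
    by apply/funext => h.
  apply: is_deriveN.
  by apply: trigger_derive; last exact: mulr1.
have hc2 : (fun h : R => h^-1 *: ((g \o shift 0) (h *: 1) - g 0)) @ 0^' --> expR (-(a*0)) * (-a).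
  rewrite -(@derive_val _ _ _ _ _ _ _ D); exact: (@ex_derive _ _ _ _ _ _ _ D).
move: hc2; rewrite mulr0 oppr0 expR0 mul1r => hc2.
apply: cvg_dnbhs_at_right.
have -> : (fun h : R => h^-1 * (1 - expR (-(a*h)))) = (fun h => - (h^-1 *: ((g \o shift 0) (h *: 1) - g 0))).
  apply/funext => h /=; rewrite /g /= mulr0 oppr0 expR0.
  rewrite -[h *: 1]/(h * 1) mulr1 addr0.
  have -> : h^-1 *: (expR (- (a * h)) - 1) = h^-1 * (expR (- (a * h)) - 1) by [].
  by rewrite !mulrBr mulr1 opprB.
rewrite -[X in _ --> X]opprK.
exact: (cvgN hc2).
Qed.

Lemma cvg_lin_exp (c t : R) :
  (fun dt : R => expR (- (c * (t + dt)))) @ 0^'+ --> expR (- (c * (t + 0))).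
Proof.
apply: cvg_at_right_filter.
have h : (fun dt : R => - (c * (t + dt))) @ (0:R) --> - (c * (t + 0)).
  apply: cvgN; apply: cvgM; first exact: cvg_cst.
  apply: cvgD; [exact: cvg_cst|exact: cvg_id].
exact: (cvg_comp _ _ h (@continuous_expR R _)).
Qed.

Lemma cvg_mul_exp (c : R) :
  (fun dt : R => expR (- (c * dt))) @ 0^'+ --> expR (- (c * 0)).
Proof.
apply: cvg_at_right_filter.
have h : (fun dt : R => - (c * dt)) @ (0:R) --> - (c * 0).
  apply: cvgN; apply: cvgM; first exact: cvg_cst.
  exact: cvg_id.
exact: (cvg_comp _ _ h (@continuous_expR R _)).
Qed.

Lemma cvg_sumR (I : finType) (F : set_system R) (FF : Filter F)
  (f : I -> R -> R) (l : I -> R) :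
  (forall i, f i @ F --> l i) -> (fun x => \sum_i f i x) @ F --> \sum_i l i.
Proof. move=> h; apply: cvg_big => //; exact: add_continuous. Qed.

Variable n : nat.
Variable x : 'I_n -> R.
Variable t : R.
Hypothesis hx : forall i, 0 <= x i.
Hypothesis ht : 0 <= t.

Definition c2f (dt : R) (S1 S2 : {set 'I_n}) (i : 'I_n) : R :=
  if i \in S1 then 1 - expR (- (x i * t))
  else if i \in S2 then expR (- (x i * t)) * (1 - expR (- (x i * dt)))
  else expR (- (x i * (t + dt))).

Lemma clock2E dt S1 S2 :
  clock2 x t dt S1 S2 = (S1 \subset S2)%:R * \prod_i c2f dt S1 S2 i.
Proof. by []. Qed.

Lemma c2f_cvg S1 S2 i : (fun dt => c2f dt S1 S2 i) @ 0^'+ --> c2f 0 S1 S2 i.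
Proof.
rewrite /c2f; case: (i \in S1); first exact: cvg_cst.
case: (i \in S2); last exact: cvg_lin_exp.
apply: cvgM; first exact: cvg_cst.
apply: cvgB; first exact: cvg_cst.
exact: cvg_mul_exp.
Qed.

Lemma expR_le1' (y : R) : 0 <= y -> expR (- y) <= 1.
Proof.
move=> y0; rewrite -expR0 ler_expR; by rewrite oppr_le0.
Qed.

Lemma c2f0_ge0 S1 S2 i : 0 <= c2f 0 S1 S2 i.
Proof.
rewrite /c2f; case: (i \in S1).
  by rewrite subr_ge0; apply: expR_le1'; apply: mulr_ge0.
case: (i \in S2); last exact: expR_ge0.
by rewrite mulr0 oppr0 expR0 subrr mulr0.
Qed.

Lemma lim_clock2 S1 S2 : S1 != S2 ->
  exists D : R, [/\ 0 <= D,
    (fun dt => dt^-1 * clock2 x t dt S1 S2) @ 0^'+ --> D,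
    ~~ (S1 \subset S2) -> D = 0 &
    forall j, j \notin S1 -> S2 = j |: S1 -> D = x j * clock1 x t S1].
Proof.
move=> neq; case: (boolP (S1 \subset S2)) => sub; last first.
  exists 0; split => //.
  - have -> : (fun dt => dt^-1 * clock2 x t dt S1 S2) = (fun _ => 0).
      by apply/funext => dt; rewrite clock2E (negbTE sub) mul0r mulr0.
    exact: cvg_cst.
  - move=> j _ E; move: sub; by rewrite E finset.subsetUr.
have [j jS2 jS1] : exists2 j, j \in S2 & j \notin S1.
  apply/subsetPn; apply: contra neq => h.
  by rewrite finset.eqEsubset sub h.
exists (expR (- (x j * t)) * x j * \prod_(i | i != j) c2f 0 S1 S2 i); split.
- apply: mulr_ge0; first by apply: mulr_ge0; [exact: expR_ge0|exact: hx].
  by apply: prodr_ge0 => i _; exact: c2f0_ge0.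
- have -> : (fun dt => dt^-1 * clock2 x t dt S1 S2) = (fun dt =>
     (expR (- (x j * t)) * (dt^-1 * (1 - expR (- (x j * dt))))) *
      \prod_(i | i != j) c2f dt S1 S2 i).
    apply/funext => dt; rewrite clock2E sub mul1r (bigD1 j) //=.
    rewrite /c2f (negbTE jS1) jS2 -/(c2f dt S1 S2).
    ring.
  apply: cvgM; first by apply: cvgM; [exact: cvg_cst|exact: lim_expdiff].
  apply: cvg_big => //; first exact: mul_continuous.
  by move=> i _; exact: c2f_cvg.
- by move=> /negP [].
- move=> k kS1 E.
  have jk : j = k.
    by move: jS2; rewrite E finset.in_setU1 (negbTE jS1) orbF => /eqP.
  subst k.
  rewrite /clock1 [in RHS](bigD1 j) //= (negbTE jS1).
  have -> : \prod_(i | i != j) c2f 0 S1 S2 i =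
     \prod_(i | i != j) (if i \in S1 then 1 - expR (- (x i * t)) else expR (- (x i * t))).
    apply: eq_bigr => i ij; rewrite /c2f E finset.in_setU1 (negbTE ij) /=.
    by case: (i \in S1) => //; rewrite addr0.
  ring.
Qed.

End Analysis.

Unset Implicit Arguments. Set Strict Implicit.

Theorem lemma2 (R : realType) (n : nat) (p : 'I_n -> 'I_n -> R) (x : 'I_n -> R) :
  (forall u v, 0 <= p u v <= 1) ->
  (forall i, 0 <= x i <= 1) ->
  forall t : R, 0 <= t <= 1 ->
  forall psi : preal n, 0 < probPsi p x t psi ->
  exists L : R,
    (fun dt : R => dt^-1 * condDiff p x t dt psi) @ 0^'+ --> L /\
    fplus p x - sigma p (Gammap psi) <= L.
Proof.
move=> hp hx01 t ht01 psi hP.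
have hx : forall i, 0 <= x i by move=> i; case/andP: (hx01 i).
have ht : 0 <= t by case/andP: ht01.
set S := psi.1.
set G := Gammap psi.
set P := probPsi p x t psi.
set PE := \sum_(phi : realization n) probR p phi * (observe phi S == psi)%:R.
have PE_eq : P = clock1 x t S * PE.
  rewrite /P /probPsi /PE mulr_sumr; apply: eq_bigr => phi _.
  rewrite (bigD1 S) //= big1 ?addr0 => [|S1 ne]; first by rewrite mulrCA mulrA.
  by rewrite obs_eqS (negbTE ne) /= mulr0.
have Pne0 : P != 0 by rewrite gt_eqF.
have PEne0 : PE != 0 by move: Pne0; rewrite PE_eq mulf_eq0 negb_or => /andP [].
pose K phi S1 S2 : R := probR p phi * (observe phi S1 == psi)%:R *
    (fval (observe phi S2) - fval (observe phi S1)) / P.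
pose Dv S1 S2 : R := if S1 == S2 then 0
  else lim ((fun dt => dt^-1 * clock2 x t dt S1 S2) @ 0^'+).
exists (\sum_phi \sum_(S1 : {set 'I_n}) \sum_(S2 : {set 'I_n}) K phi S1 S2 * Dv S1 S2).
split.
  have -> : (fun dt => dt^-1 * condDiff p x t dt psi) = (fun dt =>
      \sum_phi \sum_(S1 : {set 'I_n}) \sum_(S2 : {set 'I_n})
        K phi S1 S2 * (dt^-1 * clock2 x t dt S1 S2)).
    apply/funext => dt; rewrite /condDiff -/P mulrCA mulr_suml.
    apply: eq_bigr => phi _; rewrite mulr_suml; apply: eq_bigr => S1 _.
    rewrite mulr_suml; apply: eq_bigr => S2 _; rewrite /K; ring.
  apply: cvg_sumR => phi; apply: cvg_sumR => S1; apply: cvg_sumR => S2.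
  rewrite /Dv; case: (eqVneq S1 S2) => [<-|ne].
    have K0 : K phi S1 S1 = 0 by rewrite /K subrr mulr0 mul0r.
    rewrite K0 mul0r.
    have -> : (fun dt => 0 * (dt^-1 * clock2 x t dt S1 S1)) = (fun _ => 0 : R).
      by apply/funext => dt; rewrite mul0r.
    exact: cvg_cst.
  have [D [D0 hD _ _]] := lim_clock2 hx ht ne.
  rewrite (cvg_lim (@Rhausdorff R) hD).
  by apply: cvgM; [exact: cvg_cst|exact: hD].
have L1 : \sum_phi \sum_(S1 : {set 'I_n}) \sum_(S2 : {set 'I_n}) K phi S1 S2 * Dv S1 S2
   = \sum_phi \sum_(S2 : {set 'I_n}) K phi S S2 * Dv S S2.
  apply: eq_bigr => phi _; rewrite (bigD1 S) //= [X in _ + X]big1 ?addr0 // => S1 ne.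
  apply: big1 => S2 _; rewrite /K obs_eqS (negbTE ne) /=.
  by rewrite !(mulr0, mul0r).
have Dvlim : forall S1 S2, S1 != S2 ->
    exists D : R, [/\ 0 <= D, Dv S1 S2 = D, ~~ (S1 \subset S2) -> D = 0 &
    forall j, j \notin S1 -> S2 = j |: S1 -> D = x j * clock1 x t S1].
  move=> S1 S2 ne; have [D [D0 hD Dns Dj]] := lim_clock2 hx ht ne.
  exists D; split => //.
  by rewrite /Dv (negbTE ne) (cvg_lim (@Rhausdorff R) hD).
have Pgt0 : 0 < P := hP.
have nonneg : forall phi S2, 0 <= K phi S S2 * Dv S S2.
  move=> phi S2; case: (eqVneq S S2) => [<-|ne].
    by rewrite /Dv eqxx mulr0.
  have [D [D0 -> Dns _]] := Dvlim S S2 ne.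
  case: (boolP (S \subset S2)) => sub; last by rewrite Dns // mulr0.
  apply: mulr_ge0 => //; rewrite /K.
  apply: mulr_ge0; last by rewrite invr_ge0 ltW.
  apply: mulr_ge0; first by apply: mulr_ge0; [exact: probR_ge0|exact: ler0n].
  rewrite subr_ge0 /fval !Gammap_obs ler_nat; apply: subset_leq_card.
  exact: reach_monoS.
have inj : {in ~: S &, injective (fun j => j |: S)}.
  move=> j k; rewrite !finset.in_setC => jS kS E.
  have : j \in k |: S by rewrite -E finset.setU11.
  by rewrite finset.in_setU1 (negbTE jS) orbF => /eqP.
have L2 : forall phi, \sum_(j in ~: S) K phi S (j |: S) * Dv S (j |: S)
    <= \sum_(S2 : {set 'I_n}) K phi S S2 * Dv S S2.
  move=> phi; rewrite -(big_imset (fun S2 => K phi S S2 * Dv S S2) inj) /=.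
  rewrite big_mkcond /=; apply: ler_sum => S2 _.
  by case: ifP => _ //; exact: nonneg.
have L3 : forall phi j, j \notin S -> K phi S (j |: S) * Dv S (j |: S) =
    probR p phi * ((observe phi S == psi)%:R *
      (fval (observe phi (j |: S)) - fval (observe phi S))) * (x j * clock1 x t S / P).
  move=> phi j jS.
  have ne : S != j |: S.
    apply: contra jS => /eqP E; by rewrite E finset.setU11.
  have [D [_ -> _ Dj]] := Dvlim S (j |: S) ne.
  rewrite (Dj j jS erefl) /K; ring.
have ajS : forall j, j \in S -> aj p G j = 0.
  move=> j jS.
  have := numer p psi j; rewrite -/S -/G -/PE.
  have -> : j |: S = S by apply/finset.setUidPr; rewrite finset.sub1set.
  rewrite big1 => [|phi _]; last by rewrite subrr !mulr0.
  by move/esym/eqP; rewrite mulf_eq0 (negbTE PEne0) /= => /eqP.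
have Lb : \sum_j x j * aj p G j <=
   \sum_phi \sum_(S1 : {set 'I_n}) \sum_(S2 : {set 'I_n}) K phi S1 S2 * Dv S1 S2.
  rewrite L1; apply: le_trans (ler_sum _ (fun phi _ => L2 phi)).
  rewrite le_eqVlt; apply/orP; left; apply/eqP.
  have -> : \sum_phi \sum_(j in ~: S) K phi S (j |: S) * Dv S (j |: S) =
     \sum_phi \sum_(j in ~: S) probR p phi * ((observe phi S == psi)%:R *
      (fval (observe phi (j |: S)) - fval (observe phi S))) * (x j * clock1 x t S / P).
    apply: eq_bigr => phi _; apply: eq_bigr => j; rewrite finset.in_setC.
    exact: L3.
  rewrite exchange_big /=.
  rewrite [RHS](eq_bigr (fun j => x j * aj p G j)) => [|j _]; last first.
    rewrite -big_distrl /= numer -/S -/G -/PE.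
    have hPP : clock1 x t S * PE / P = 1 by rewrite -PE_eq divff.
    by rewrite -[RHS]mulr1 -hPP; ring.
  rewrite [LHS](bigID (fun j => j \in S)) /= big1 ?add0r => [|j jS]; last first.
    by rewrite ajS // mulr0.
  by apply: eq_big => [j|j jS] //; rewrite finset.in_setC.
rewrite lerBlDl; apply: le_trans (fplus_bound hp G hx) _.
by rewrite lerD2l.
Qed.
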